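(* Let $R$ be a ring such that the injective hull $E(R_R)$ is a projective right $R$-module. Then $R$ is right dual Kasch if and only if every right $R$-module of finite length is a homomorphic image of an injective right $R$-module.
   Context: $R$ is right dual Kasch if every simple right $R$-module is a homomorphic image of an injective right $R$-module. *)

(* Defs.v *)
From HB Require Import structures.
From mathcomp Require Import all_boot all_algebra.
Set Implicit Arguments. Unset Strict Implicit. Unset Printing Implicit Defensive.
Import GRing.Theory.
Local Open Scope ring_scope.

(* Right R-modules are encoded as left modules over the converse ring R^c:
   for M : rmodType R, the right action m . r is  r *: m. *)
Notation rmodType R := (lmodType (R^c)%type).

(* The regular right module R_R : carrier R, with  r *: x = x * r. *)
Notation regular_rmod R := ((R^c)^o)%type.

Section ModuleNotions.
Variable S : pzRingType.

Definition is_submod (M : lmodType S) (N : {pred M}) : Prop := submod_closed N.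

Definition injective_mod (E : lmodType S) : Prop :=
  forall (A B : lmodType S) (f : {linear A -> B}) (g : {linear A -> E}),
    injective f -> exists h : {linear B -> E}, forall a, h (f a) = g a.

Definition projective_mod (P : lmodType S) : Prop :=
  forall (B C : lmodType S) (g : {linear B -> C}) (f : {linear P -> C}),
    (forall c, exists b, g b = c) -> exists h : {linear P -> B}, forall p, g (h p) = f p.

Definition essential_mono (M E : lmodType S) (i : {linear M -> E}) : Prop :=
  injective i /\
  forall N : {pred E}, is_submod N ->
    (forall x, x \in N -> (exists m, i m = x) -> x = 0) ->
    forall x, x \in N -> x = 0.

Definition injective_hull (M E : lmodType S) (i : {linear M -> E}) : Prop :=
  injective_mod E /\ essential_mono i.

Definition simple_mod (M : lmodType S) : Prop :=
  (exists x : M, x <> 0) /\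
  forall N : {pred M}, is_submod N ->
    (forall x, x \in N -> x = 0) \/ (forall x, x \in N).

(* A composition series: 0 = s 0 < s 1 < ... < s n = M with every
   s i a maximal proper submodule of s (i+1) (i.e. s(i+1)/s i simple). *)
Definition finite_length (M : lmodType S) : Prop :=
  exists (n : nat) (s : nat -> {pred M}),
    [/\ (forall i, is_submod (s i)),
        (forall x, x \in s 0%N -> x = 0),
        (forall x, x \in s n) &
        forall i, (i < n)%N ->
          [/\ {subset s i <= s i.+1},
              (exists x, x \in s i.+1 /\ x \notin s i) &
              forall N : {pred M}, is_submod N ->
                {subset s i <= N} -> {subset N <= s i.+1} ->
                N =i s i \/ N =i s i.+1]].

Definition image_of_injective (M : lmodType S) : Prop :=
  exists (E : lmodType S) (f : {linear E -> M}),
    injective_mod E /\ forall m, exists e, f e = m.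

End ModuleNotions.

Definition right_dual_Kasch (R : nzRingType) : Prop :=
  forall M : rmodType R, simple_mod M -> image_of_injective M.

(* Main.v *)
Require Import Defs.
From HB Require Import structures.
From mathcomp Require Import all_boot all_algebra.
From Stdlib Require ClassicalEpsilon.
Set Implicit Arguments. Unset Strict Implicit. Unset Printing Implicit Defensive.
Import GRing.Theory.
Local Open Scope ring_scope.

Section Quot.
Variables (S : pzRingType) (M : lmodType S) (N : {pred M}).
Hypothesis hN : submod_closed N.

Lemma N0 : 0 \in N. Proof. by case: hN. Qed.
Lemma ND x y : x \in N -> y \in N -> x + y \in N.
Proof. by move=> hx hy; rewrite -[x]scale1r; case: hN => _ /(_ 1 x y hx hy). Qed.
Lemma NZ a x : x \in N -> a *: x \in N.
Proof. by move=> hx; rewrite -[_ *: _]addr0; case: hN => h0 /(_ a x 0 hx h0). Qed.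
Lemma NN x : x \in N -> - x \in N.
Proof. by move=> hx; rewrite -scaleN1r NZ. Qed.
Lemma NB x y : x \in N -> y \in N -> x - y \in N.
Proof. by move=> hx hy; rewrite ND // NN. Qed.

Lemma canon_ex (x : M) : exists y, (y - x) \in N.
Proof. by exists x; rewrite subrr N0. Qed.

Definition canon (x : M) : M := xchoose (canon_ex x).

Lemma canonP x : canon x - x \in N.
Proof. exact: (xchooseP (canon_ex x)). Qed.

Lemma canon_eq x y : x - y \in N -> canon x = canon y.
Proof.
move=> h; apply: eq_xchoose => z.
apply/idP/idP => hz.
- by have := ND hz h; rewrite addrA subrK.
- by have := NB hz h; rewrite opprB addrA subrK.
Qed.

Lemma canon_id x : canon (canon x) = canon x.
Proof. exact/canon_eq/canonP. Qed.

Definition Q := {x : M | canon x == x}.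
HB.instance Definition _ := Choice.on Q.

Definition pi (x : M) : Q := exist _ (canon x) (introT eqP (canon_id x)).

Lemma piP x y : pi x = pi y <-> x - y \in N.
Proof.
split; last by move=> h; apply: val_inj => /=; exact: canon_eq.
move=> /(congr1 val) /= e.
have h1 := canonP x; have h2 := canonP y.
have := NB h2 h1; rewrite e.
by rewrite opprB addrC addrA subrK.
Qed.

Lemma piK (q : Q) : pi (val q) = q.
Proof. by case: q => x hx; apply: val_inj => /=; apply/eqP. Qed.

Lemma Qind (P : Q -> Prop) : (forall x, P (pi x)) -> forall q, P q.
Proof. by move=> h q; rewrite -(piK q). Qed.

Definition qzero := pi 0.
Definition qopp (a : Q) := pi (- val a).
Definition qadd (a b : Q) := pi (val a + val b).
Definition qscale (r : S) (a : Q) := pi (r *: val a).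

Lemma valpi x : val (pi x) - x \in N.
Proof. exact: canonP. Qed.

Lemma qaddE x y : qadd (pi x) (pi y) = pi (x + y).
Proof.
apply/piP; have := ND (valpi x) (valpi y).
by rewrite opprD addrACA.
Qed.
Lemma qoppE x : qopp (pi x) = pi (- x).
Proof. by apply/piP; have := NN (valpi x); rewrite opprB opprK addrC. Qed.
Lemma qscaleE r x : qscale r (pi x) = pi (r *: x).
Proof. by apply/piP; have := NZ r (valpi x); rewrite scalerBr. Qed.

Lemma qaddA : associative qadd.
Proof. by elim/Qind=> x; elim/Qind=> y; elim/Qind=> z; rewrite !qaddE addrA. Qed.
Lemma qaddC : commutative qadd.
Proof. by elim/Qind=> x; elim/Qind=> y; rewrite !qaddE addrC. Qed.
Lemma qadd0 : left_id qzero qadd.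
Proof. by elim/Qind=> x; rewrite /qzero qaddE add0r. Qed.
Lemma qaddN : left_inverse qzero qopp qadd.
Proof. by elim/Qind=> x; rewrite qoppE qaddE addNr. Qed.

HB.instance Definition _ := GRing.isZmodule.Build Q qaddA qaddC qadd0 qaddN.

Lemma qscaleA a b v : qscale a (qscale b v) = qscale (a * b) v.
Proof. by elim/Qind: v => x; rewrite !qscaleE scalerA. Qed.
Lemma qscale1 : left_id 1 qscale.
Proof. by elim/Qind=> x; rewrite qscaleE scale1r. Qed.
Lemma qscaleDr : right_distributive qscale (@GRing.add Q).
Proof. by move=> a; elim/Qind=> x; elim/Qind=> y; rewrite /GRing.add /= qaddE !qscaleE qaddE scalerDr. Qed.
Lemma qscaleDl v : {morph qscale^~ v: a b / a + b}.
Proof. by elim/Qind: v => x a b; rewrite /GRing.add /= !qscaleE qaddE scalerDl. Qed.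

HB.instance Definition _ := GRing.Zmodule_isLmodule.Build S Q qscaleA qscale1 qscaleDr qscaleDl.

Lemma piD x y : pi (x + y) = pi x + pi y.
Proof. by rewrite -qaddE. Qed.
Lemma piZ r x : pi (r *: x) = r *: pi x.
Proof. by rewrite -qscaleE. Qed.
Lemma pi0E x : (pi x = 0) <-> x \in N.
Proof. by change (pi x = pi 0 <-> x \in N); have := piP x 0; rewrite subr0. Qed.

Lemma pi_linear : linear pi.
Proof. by move=> r x y; rewrite piD piZ. Qed.
HB.instance Definition _ := GRing.isLinear.Build S M Q *:%R pi pi_linear.

End Quot.
Arguments Q {S M N} hN.
Arguments pi {S M N} hN x.
Arguments piP {S M N} hN x y.
Arguments pi0E {S M N} hN x.
Arguments piK {S M N} hN q.
Arguments valpi {S M N} hN x.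

Definition pb (P : Prop) : bool :=
  if ClassicalEpsilon.excluded_middle_informative P then true else false.
Lemma pbP (P : Prop) : reflect P (pb P).
Proof. by rewrite /pb; case: ClassicalEpsilon.excluded_middle_informative => h; constructor. Qed.

Section Maps.
Variables (S : pzRingType).

Definition smul_e (V : lmodType S) (e : V) : S^o -> V := fun r : S => r *: e.
Lemma smul_e_lin (V : lmodType S) (e : V) : linear (smul_e e).
Proof. by move=> a r s; rewrite /smul_e scalerDl scalerA. Qed.
HB.instance Definition _ (V : lmodType S) (e : V) :=
  GRing.isLinear.Build S S^o V *:%R (smul_e e) (smul_e_lin e).

Definition fstf (A B : lmodType S) : (A * B)%type -> A := fst.
Lemma fstf_lin (A B : lmodType S) : linear (@fstf A B).
Proof. by []. Qed.
HB.instance Definition _ (A B : lmodType S) :=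
  GRing.isLinear.Build S (A * B)%type A *:%R (@fstf A B) (@fstf_lin A B).
Definition sndf (A B : lmodType S) : (A * B)%type -> B := snd.
Lemma sndf_lin (A B : lmodType S) : linear (@sndf A B).
Proof. by []. Qed.
HB.instance Definition _ (A B : lmodType S) :=
  GRing.isLinear.Build S (A * B)%type B *:%R (@sndf A B) (@sndf_lin A B).

Definition pairf (A B C : lmodType S) (f : {linear A -> B}) (g : {linear A -> C})
  : A -> (B * C)%type := fun a => (f a, g a).
Lemma pairf_lin (A B C : lmodType S) (f : {linear A -> B}) (g : {linear A -> C}) :
  linear (pairf f g).
Proof. by move=> a x y; rewrite /pairf !linearP. Qed.
HB.instance Definition _ (A B C : lmodType S) (f : {linear A -> B}) (g : {linear A -> C}) :=
  GRing.isLinear.Build S A (B * C)%type *:%R (pairf f g) (pairf_lin f g).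

Definition sumf (A B C : lmodType S) (f : {linear A -> C}) (g : {linear B -> C})
  : (A * B)%type -> C := fun p => f p.1 + g p.2.
Lemma sumf_lin (A B C : lmodType S) (f : {linear A -> C}) (g : {linear B -> C}) :
  linear (sumf f g).
Proof.
move=> a [x1 x2] [y1 y2]; rewrite /sumf /= !linearP.
by rewrite scalerDr addrACA.
Qed.
HB.instance Definition _ (A B C : lmodType S) (f : {linear A -> C}) (g : {linear B -> C}) :=
  GRing.isLinear.Build S (A * B)%type C *:%R (sumf f g) (sumf_lin f g).

Definition qlift (M : lmodType S) (N : {pred M}) (hN : submod_closed N) (V : lmodType S)
  (f : {linear M -> V}) (hf : forall x, x \in N -> f x = 0) : Q hN -> V := fun q => f (val q).
Arguments qlift {M N} hN {V} f hf.

Lemma qliftE (M : lmodType S) (N : {pred M}) (hN : submod_closed N) (V : lmodType S)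
  (f : {linear M -> V}) (hf : forall x, x \in N -> f x = 0) x :
  qlift hN f hf (pi hN x) = f x.
Proof.
rewrite /qlift; apply/eqP; rewrite -subr_eq0 -linearB; apply/eqP/hf.
exact: valpi.
Qed.

Lemma qlift_lin (M : lmodType S) (N : {pred M}) (hN : submod_closed N) (V : lmodType S)
  (f : {linear M -> V}) (hf : forall x, x \in N -> f x = 0) : linear (qlift hN f hf).
Proof.
move=> a x y; rewrite -(piK hN x) -(piK hN y) -linearP !qliftE //.
by rewrite linearP.
Qed.
HB.instance Definition _ (M : lmodType S) (N : {pred M}) (hN : submod_closed N) (V : lmodType S)
  (f : {linear M -> V}) (hf : forall x, x \in N -> f x = 0) :=
  GRing.isLinear.Build S (Q hN) V *:%R (qlift hN f hf) (qlift_lin hf).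
End Maps.

Arguments NZ {S M N} hN a x.
Arguments ND {S M N} hN x y.
Arguments NB {S M N} hN x y.
Arguments N0 {S M N} hN.

Section Gen.
Variable S : pzRingType.

Lemma smul_e1 (V : lmodType S) (x : V) : smul_e x (1 : S^o) = x.
Proof. exact: scale1r. Qed.

Lemma preim_submod (A B : lmodType S) (f : {linear A -> B}) (N : {pred B}) :
  submod_closed N -> submod_closed [pred a | f a \in N].
Proof.
move=> [h0 hl]; split; first by rewrite inE linear0.
by move=> a u v; rewrite !inE => hu hv; rewrite linearP hl.
Qed.

Lemma inj_prod (A B : lmodType S) :
  injective_mod A -> injective_mod B -> injective_mod (A * B)%type.
Proof.
move=> hA hB X Y f g finj.
have [h1 e1] := hA X Y f ((@fstf S A B) \o g) finj.
have [h2 e2] := hB X Y f ((@sndf S A B) \o g) finj.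
exists (pairf h1 h2) => a; change ((h1 (f a), h2 (f a)) = g a).
by rewrite e1 e2 /= /fstf /sndf; case: (g a).
Qed.

Lemma ext_hull (E : lmodType S) (i : {linear S^o -> E}) (hi : injective_hull i)
  (E' : lmodType S) (hE' : injective_mod E') (e : E') :
  exists h : {linear E -> E'}, h (i 1) = e.
Proof.
case: hi => _ [iinj _].
have [h eh] := hE' _ _ i (smul_e e) iinj.
by exists h; rewrite eh; exact: smul_e1.
Qed.

Lemma span_lemma (M : lmodType S) (A B : {pred M}) (hA : submod_closed A)
  (hB : submod_closed B) (x : M) (J : {pred S^o}) (hJ : submod_closed J) :
  {subset A <= B} -> x \in B ->
  let NJ := [pred y | pb (exists z r, z \in A /\ r \in J /\ y = z + smul_e x r)] in
  [/\ submod_closed NJ, {subset A <= NJ} & {subset NJ <= B}].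
Proof.
move=> AB xB NJ; split.
- split.
    rewrite inE; apply/pbP; exists 0, 0; split; first exact: N0 hA.
    by split; [exact: N0 hJ | rewrite linear0 addr0].
  move=> a u v; rewrite !inE => /pbP [z1 [r1 [z1A [r1J ->]]]] /pbP [z2 [r2 [z2A [r2J ->]]]].
  apply/pbP; exists (a *: z1 + z2), (a *: r1 + r2); split.
    by case: hA => _ ->.
  split; first by case: hJ => _ ->.
  by rewrite linearP scalerDr addrACA.
- move=> z zA; rewrite inE; apply/pbP; exists z, 0; split => //.
  by split; [exact: N0 hJ | rewrite linear0 addr0].
- move=> y; rewrite inE => /pbP [z [r [zA [_ ->]]]].
  exact: (ND hB _ _ (AB _ zA) (NZ hB r x xB)).
Qed.

Lemma simple_T (M : lmodType S) (A B : {pred M}) (hA : submod_closed A)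
  (hB : submod_closed B) (x : M)
  (maxi : forall N : {pred M}, is_submod N -> {subset A <= N} -> {subset N <= B} ->
     N =i A \/ N =i B)
  (AB : {subset A <= B}) (xB : x \in B) (xA : x \notin A)
  (I : {pred S^o}) (hI : submod_closed I) (hIdef : forall r, (r \in I) = (smul_e x r \in A)) :
  simple_mod (Q hI).
Proof.
split.
  exists (pi hI 1) => /(pi0E hI); rewrite hIdef.
  by have -> := smul_e1 x; apply/negP.
move=> Nq hNq.
pose J : {pred S^o} := [pred r | pi hI r \in Nq].
have hJ : submod_closed J := preim_submod (pi hI) hNq.
have [hNJ ANJ NJB] := span_lemma hA hB hJ AB xB.
case: (maxi _ hNJ ANJ NJB) => hc; [left|right].
- move=> q; rewrite -(piK hI q) => qN; apply/(pi0E hI); rewrite hIdef -hc inE.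
  apply/pbP; exists 0, (val q); split; first exact: N0 hA.
  by split; [rewrite inE | rewrite add0r].
- move: (xB); rewrite -hc inE => /pbP [z [r [zA [rJ ex]]]].
  have e1 : pi hI 1 = pi hI r.
    apply/(piP hI); rewrite hIdef linearB /= smul_e1.
    by rewrite {1}ex addrK.
  have p1 : pi hI 1 \in Nq by rewrite e1.
  move=> q; rewrite -(piK hI q).
  have -> : val q = (val q : S) *: (1 : S^o) by rewrite /GRing.scale /= mulr1.
  by rewrite linearZ; exact: NZ hNq _ _ p1.
Qed.

End Gen.

Lemma main_gen (S : pzRingType) (E : lmodType S) (i : {linear S^o -> E})
  (hi : injective_hull i) (hP : projective_mod E)
  (K : forall M : lmodType S, simple_mod M -> image_of_injective M)
  (M : lmodType S) : finite_length M -> image_of_injective M.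
Proof.
case=> n [s [hs hs0 hsn hch]].
suff: forall k, (k <= n)%N -> exists (P : lmodType S) (g : {linear P -> M}),
    injective_mod P /\ forall y, y \in s k -> exists p, g p = y.
  case/(_ n (leqnn n)) => P [g [hP' hg]]; exists P, g; split => // m.
  exact: hg (hsn m).
have injE : injective_mod E by case: hi.
elim=> [_|k IH hk].
  exists E, \0; split => // y /hs0 ->; exists 0; exact: linear0.
have [P [g [injP hg]]] := IH (ltnW hk).
case: (hch k hk) => sub [x [xin xout]] maxi.
have hsk := hs k; have hsk1 := hs k.+1.
pose I : {pred S^o} := [pred r | smul_e x r \in s k].
have hI : submod_closed I := preim_submod (smul_e x) hsk.
have hT := @simple_T _ _ _ _ hsk hsk1 x maxi sub xin xout I hI (fun r => erefl).
have [E' [f [injE' surjf]]] := K _ hT.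
have [e fe] := surjf (pi hI 1).
have [hh hhe] := ext_hull hi injE' e.
have hf : forall r, r \in I -> pi hsk (smul_e x r) = 0.
  by move=> r rI; apply/(pi0E hsk).
pose phi := @qlift _ _ _ hI _ ((pi hsk) \o (smul_e x)) hf.
have [h eh] := hP M (Q hsk) (pi hsk) (phi \o f \o hh) (fun c => ex_intro _ _ (piK hsk c)).
have hx : h (i 1) - x \in s k.
  apply/(piP hsk); rewrite eh /= hhe fe /phi.
  transitivity (pi hsk (smul_e x (1 : S^o))).
    by apply/(piP hsk); rewrite -linearB; exact: (valpi hI 1).
  by rewrite smul_e1.
exists (P * E)%type, (sumf g h); split; first exact: inj_prod.
move=> y.
have hpT : submod_closed (predT : {pred S^o}) by split => //.
have [hNJ ANJ NJB] := span_lemma hsk hsk1 hpT sub xin.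
have xNJ : x \in [pred y | pb (exists z r, z \in s k /\ r \in (predT : {pred S^o}) /\ y = z + smul_e x r)].
  rewrite inE; apply/pbP; exists 0, 1; split; first exact: N0 hsk.
  by split => //; rewrite smul_e1 add0r.
case: (maxi _ hNJ ANJ NJB) => hc.
  by move: xout; rewrite -hc xNJ.
rewrite -hc inE => /pbP [z [r [zA [_ ->]]]].
have hw := NZ hsk r _ hx.
set w := h (i 1) - x in hw *.
have [p gp] := hg _ (NB hsk _ _ zA hw).
exists (p, (r : S) *: i 1); change (g p + h ((r : S) *: i 1) = z + smul_e x r).
by rewrite gp [h _]linearZ /= /w scalerBr opprB addrA subrK.
Qed.

Lemma simple_fl (S : pzRingType) (M : lmodType S) : simple_mod M -> finite_length M.
Proof.
case=> [[x0 hx0] hsimp].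
exists 1%N, (fun i : nat => ([pred y : M | if i is 0%N then y == 0 else true] : {pred M})).
split.
- case=> [|j] /=; last by split => // a u v; rewrite !inE.
  split; first by rewrite inE.
  by move=> a u v; rewrite !inE => /eqP -> /eqP ->; rewrite scaler0 add0r.
- by move=> x /=; rewrite inE => /eqP.
- by [].
- case=> [|//] _ /=; split => //.
    by exists x0; split => //; rewrite inE; apply/eqP.
  move=> N hN _ _; case: (hsimp N hN) => h; [left|right] => y.
    rewrite inE; apply/idP/idP; first by move/h ->.
    by move/eqP ->; case: hN.
  by rewrite h.
Qed.

Theorem mainTheorem13 (R : nzRingType)
  (hE : exists (E : rmodType R) (i : {linear regular_rmod R -> E}),
          injective_hull i /\ projective_mod E) :
  right_dual_Kasch R <->
  (forall M : rmodType R, finite_length M -> image_of_injective M).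
Proof.
case: hE => E [i [hi hP]]; split.
  by move=> K M; apply: (@main_gen _ E i hi hP K M).
by move=> H M hM; apply: H; apply: simple_fl.
Qed.
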